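(* Let $G$ be a locally Hausdorff, locally compact groupoid such that $G^{(0)}$ is paracompact. Then $G$ has a fundamental system of diagonally compact neighborhoods of $G^{(0)}$: for every neighborhood $V$ of $G^{(0)}$ in $G$ there is a diagonally compact neighborhood $U$ of $G^{(0)}$ with $U\subset V$.
   Context: A locally Hausdorff, locally compact groupoid: groupoid operations continuous, $G^{(0)}$ Hausdorff, each point has a compact Hausdorff neighborhood, range map open. ''Compact'' means the finite-subcover property (not necessarily Hausdorff). A subset $U\subset G$ is diagonally compact if $UW=\{\alpha\beta:\alpha\in U,\beta\in W, s(\alpha)=r(\beta)\}$ and $WU$ are compact whenever $W\subset G$ is compact. *)

(* Defs.v *)
From Stdlib Require Import List.
Set Implicit Arguments.

Record Topology (X : Type) := {
  is_open : (X -> Prop) -> Prop;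
  open_full : is_open (fun _ => True);
  open_inter : forall U V : X -> Prop,
      is_open U -> is_open V -> is_open (fun x => U x /\ V x);
  open_union : forall (I : Type) (F : I -> X -> Prop),
      (forall i, is_open (F i)) -> is_open (fun x => exists i, F i x)
}.

Section Topo.
Variables (X : Type) (T : Topology X).

Definition rel_open (A W : X -> Prop) : Prop :=
  exists O, is_open T O /\ forall x, A x -> (W x <-> O x).

(** Compact = finite-subcover property (no Hausdorff assumption). *)
Definition compact (K : X -> Prop) : Prop :=
  forall (I : Type) (U : I -> X -> Prop),
    (forall i, is_open T (U i)) ->
    (forall x, K x -> exists i, U i x) ->
    exists l : list I, forall x, K x -> exists i, In i l /\ U i x.

Definition hausdorff_on (A : X -> Prop) : Prop :=
  forall x y, A x -> A y -> x <> y ->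
    exists O1 O2, is_open T O1 /\ is_open T O2 /\ O1 x /\ O2 y /\
      (forall z, A z -> O1 z -> O2 z -> False).

Definition nbhd_of_set (A N : X -> Prop) : Prop :=
  exists O, is_open T O /\ (forall x, A x -> O x) /\ (forall x, O x -> N x).

Definition nbhd_of_point (x : X) (N : X -> Prop) : Prop :=
  exists O, is_open T O /\ O x /\ (forall y, O y -> N y).

Definition paracompact_on (A : X -> Prop) : Prop :=
  forall (I : Type) (U : I -> X -> Prop),
    (forall i, rel_open A (U i)) ->
    (forall x, A x -> exists i, U i x) ->
    exists (J : Type) (V : J -> X -> Prop),
      (forall j, rel_open A (V j)) /\
      (forall x, A x -> exists j, V j x) /\
      (forall j, exists i, forall x, A x -> V j x -> U i x) /\
      (forall x, A x -> exists W, rel_open A W /\ W x /\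
         exists l : list J, forall j,
           (exists y, A y /\ W y /\ V j y) -> In j l).
End Topo.

Definition prod_open (X Y : Type) (TX : Topology X) (TY : Topology Y)
  (W : X * Y -> Prop) : Prop :=
  forall p, W p -> exists U V, is_open TX U /\ is_open TY V /\
    U (fst p) /\ V (snd p) /\ (forall x y, U x -> V y -> W (x, y)).

(** * Groupoids (the unit space is a subset of the arrow set) *)
Record Groupoid (G : Type) := {
  rng : G -> G;
  src : G -> G;
  mul : G -> G -> G;   (* meaningful only on composable pairs: src x = rng y *)
  inv : G -> G;
  rng_rng : forall x, rng (rng x) = rng x;
  src_rng : forall x, src (rng x) = rng x;
  rng_src : forall x, rng (src x) = src x;
  src_src : forall x, src (src x) = src x;
  rng_mul : forall x y, src x = rng y -> rng (mul x y) = rng x;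
  src_mul : forall x y, src x = rng y -> src (mul x y) = src y;
  mul_assoc : forall x y z, src x = rng y -> src y = rng z ->
      mul (mul x y) z = mul x (mul y z);
  mul_rng_l : forall x, mul (rng x) x = x;
  mul_src_r : forall x, mul x (src x) = x;
  rng_inv : forall x, rng (inv x) = src x;
  src_inv : forall x, src (inv x) = rng x;
  mul_inv_r : forall x, mul x (inv x) = rng x;
  mul_inv_l : forall x, mul (inv x) x = src x
}.

Section GroupoidDefs.
Variables (G : Type) (T : Topology G) (gr : Groupoid G).

Definition units (x : G) : Prop := rng gr x = x.

Definition set_prod (U W : G -> Prop) : G -> Prop :=
  fun g => exists a b, U a /\ W b /\ src gr a = rng gr b /\ g = mul gr a b.

Definition lhlc_groupoid : Prop :=
  (* multiplication continuous on G^(2) (subspace of G × G) *)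
  (forall O, is_open T O -> exists W, prod_open T T W /\
     forall x y, src gr x = rng gr y -> (O (mul gr x y) <-> W (x, y))) /\
  (forall O, is_open T O -> is_open T (fun x => O (inv gr x))) /\
  hausdorff_on T units /\
  (forall x, exists K, nbhd_of_point T x K /\ compact T K /\ hausdorff_on T K) /\
  (forall O, is_open T O -> rel_open T units (fun u => exists g, O g /\ u = rng gr g)).

Definition diagonally_compact (U : G -> Prop) : Prop :=
  forall W, compact T W -> compact T (set_prod U W) /\ compact T (set_prod W U).
End GroupoidDefs.

(* Main.v *)
Require Import Defs.
From Stdlib Require Import List Classical FunctionalExtensionality PropExtensionality IndefiniteDescription.

Lemma choice' {A B} {R : A -> B -> Prop} :
  (forall a, exists b, R a b) -> exists f : A -> B, forall a, R a (f a).
Proof.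
  intros H. exists (fun a => proj1_sig (constructive_indefinite_description _ (H a))).
  intro a. exact (proj2_sig (constructive_indefinite_description _ (H a))).
Qed.

Lemma pred_ext {X} (A B : X -> Prop) : (forall x, A x <-> B x) -> A = B.
Proof. intros H; apply functional_extensionality; intro x; apply propositional_extensionality; auto. Qed.

Lemma open_ext {X} {T : Topology X} (A B : X -> Prop) : is_open T A -> (forall x, A x <-> B x) -> is_open T B.
Proof. intros HA H. rewrite <- (pred_ext _ _ H). exact HA. Qed.

Lemma compact_ext {X} {T : Topology X} (A B : X -> Prop) : compact T A -> (forall x, A x <-> B x) -> compact T B.
Proof. intros HA H. rewrite <- (pred_ext _ _ H). exact HA. Qed.

Lemma open_local {X} (T : Topology X) (S : X -> Prop) :
  (forall x, S x -> exists O, is_open T O /\ O x /\ forall y, O y -> S y) -> is_open T S.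
Proof.
  intros H.
  pose (I := {O : X -> Prop | is_open T O /\ forall y, O y -> S y}).
  apply open_ext with (A := fun x => exists i : I, proj1_sig i x).
  - apply (open_union T (fun i : I => proj1_sig i)). intros i; exact (proj1 (proj2_sig i)).
  - intro x; split.
    + intros [[O [HO HS]] Hx]. simpl in Hx. auto.
    + intros Hx. destruct (H x Hx) as [O [HO [Ox HS]]].
      exists (exist _ O (conj HO HS)). exact Ox.
Qed.

Lemma open_or {X} (T : Topology X) A B : is_open T A -> is_open T B -> is_open T (fun x => A x \/ B x).
Proof.
  intros HA HB.
  apply open_ext with (A := fun x => exists b : bool, (if b then A else B) x).
  - apply (open_union T (fun b : bool => if b then A else B)). intros [|]; auto.
  - intro x; split.
    + intros [[|] H]; auto.
    + intros [H|H]; [exists true | exists false]; auto.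
Qed.

Lemma open_finite_inter {X} (T : Topology X) {J} (f : J -> X -> Prop) (L : list J) :
  (forall j, In j L -> is_open T (f j)) -> is_open T (fun x => forall j, In j L -> f j x).
Proof.
  induction L as [|a L IH]; intros H.
  - apply open_ext with (A := fun _ => True). apply open_full.
    intro x; split; intros; simpl in *; tauto.
  - apply open_ext with (A := fun x => f a x /\ (forall j, In j L -> f j x)).
    + apply open_inter. apply H; left; auto. apply IH; intros; apply H; right; auto.
    + intro x; split.
      * intros [H1 H2] j [<-|Hj]; auto.
      * intros H1; split; [apply H1; left; auto| intros; apply H1; right; auto].
Qed.

Lemma open_finite_union {X} (T : Topology X) {J} (f : J -> X -> Prop) (L : list J) :
  (forall j, In j L -> is_open T (f j)) -> is_open T (fun x => exists j, In j L /\ f j x).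
Proof.
  intros H.
  apply open_ext with (A := fun x => exists i : {j : J | In j L}, f (proj1_sig i) x).
  - apply (open_union T (fun i : {j : J | In j L} => f (proj1_sig i))).
    intros [j Hj]; apply H; auto.
  - intro x; split.
    + intros [[j Hj] Hx]; exists j; auto.
    + intros [j [Hj Hx]]; exists (exist _ j Hj); auto.
Qed.

Fixpoint somes {I} (l : list (option I)) : list I :=
  match l with
  | nil => nil
  | Some i :: t => i :: somes t
  | None :: t => somes t
  end.

Lemma somes_in {I} l (i : I) : In (Some i) l -> In i (somes l).
Proof.
  induction l as [|[j|] t IH]; simpl; intros H.
  - contradiction.
  - destruct H as [H|H]; [inversion H; left; auto | right; auto].
  - destruct H as [H|H]; [discriminate | auto].
Qed.

Lemma compact_diff {X} {T : Topology X} {K O} :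
  compact T K -> is_open T O -> compact T (fun x => K x /\ ~ O x).
Proof.
  intros HK HO I U HU Hcov.
  destruct (HK (option I) (fun o => match o with Some i => U i | None => O end)) as [l Hl].
  - intros [i|]; auto.
  - intros x Kx. destruct (classic (O x)) as [Ox|nOx].
    + exists None; exact Ox.
    + destruct (Hcov x (conj Kx nOx)) as [i Hi]. exists (Some i); exact Hi.
  - exists (somes l). intros x [Kx nOx].
    destruct (Hl x Kx) as [[i|] [Hin Hi]].
    + exists i; split; [apply somes_in; auto | auto].
    + contradiction.
Qed.

Lemma compact_list_union {X} (T : Topology X) {J} (S : J -> X -> Prop) (L : list J) :
  (forall j, compact T (S j)) -> compact T (fun x => exists j, In j L /\ S j x).
Proof.
  intros HS. induction L as [|a L IH].
  - intros I U HU Hc. exists nil. intros x [j [[] _]].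
  - intros I U HU Hc.
    destruct (HS a I U HU) as [l1 H1].
    { intros x Hx. apply Hc. exists a; split; [left; auto|auto]. }
    destruct (IH I U HU) as [l2 H2].
    { intros x [j [Hj Hx]]. apply Hc. exists j; split; [right; auto|auto]. }
    exists (l1 ++ l2). intros x [j [[<-|Hj] Hx]].
    + destruct (H1 x Hx) as [i [Hi Ui]]. exists i; split; [apply in_or_app; left; auto| auto].
    + destruct (H2 x (ex_intro _ j (conj Hj Hx))) as [i [Hi Ui]].
      exists i; split; [apply in_or_app; right; auto|auto].
Qed.

Lemma tube {X} (T : Topology X) (A B : X -> Prop) (I : Type) (Q : I -> X -> X -> Prop) :
  compact T A -> compact T B ->
  (forall a b, A a -> B b -> exists i U V, is_open T U /\ is_open T V /\ U a /\ V b /\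
       forall x y, U x -> V y -> Q i x y) ->
  exists l : list I, forall a b, A a -> B b -> exists i, In i l /\ Q i a b.
Proof.
  intros HA HB H.
  assert (S1 : forall a, A a -> exists (Ua : X -> Prop) (li : list I), is_open T Ua /\ Ua a /\
             forall x b, Ua x -> B b -> exists i, In i li /\ Q i x b).
  { intros a Aa.
    pose (J := {p : I * (X -> Prop) * (X -> Prop) | is_open T (snd (fst p)) /\ is_open T (snd p)
              /\ snd (fst p) a /\ forall x y, snd (fst p) x -> snd p y -> Q (fst (fst p)) x y}).
    destruct (HB J (fun p => snd (proj1_sig p))) as [L HL].
    - intros i; exact (proj1 (proj2 (proj2_sig i))).
    - intros b Bb. destruct (H a b Aa Bb) as [i [U [V [HU [HV [Ua [Vb HQ]]]]]]].
      exists (exist _ (i, U, V) (conj HU (conj HV (conj Ua HQ)))). exact Vb.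
    - exists (fun x => forall p, In p L -> snd (fst (proj1_sig p)) x).
      exists (map (fun p => fst (fst (proj1_sig p))) L).
      split; [|split].
      + apply open_finite_inter. intros i _; exact (proj1 (proj2_sig i)).
      + intros i _; exact (proj1 (proj2 (proj2 (proj2_sig i)))).
      + intros x b Hx Bb. destruct (HL b Bb) as [p [Hp Vb]].
        exists (fst (fst (proj1_sig p))). split.
        * exact (in_map (fun p : J => fst (fst (proj1_sig p))) L p Hp).
        * pose proof (Hx p Hp) as Hxp. exact (proj2 (proj2 (proj2 (proj2_sig p))) x b Hxp Vb). }
  pose (J2 := {t : (X -> Prop) * list I | is_open T (fst t) /\
               forall x b, fst t x -> B b -> exists i, In i (snd t) /\ Q i x b}).
  destruct (HA J2 (fun t => fst (proj1_sig t))) as [L HL].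
  - intros i; exact (proj1 (proj2_sig i)).
  - intros a Aa. destruct (S1 a Aa) as [Ua [li [HU [Uaa HQ]]]].
    exists (exist _ (Ua, li) (conj HU HQ)). exact Uaa.
  - exists (flat_map (fun t => snd (proj1_sig t)) L).
    intros a b Aa Bb. destruct (HL a Aa) as [t [Ht Hta]].
    destruct (proj2 (proj2_sig t) a b Hta Bb) as [i [Hi Qi]].
    exists i; split; auto. apply in_flat_map. exists t; split; auto.
Qed.


Lemma rng_cont {G} {T : Topology G} {gr : Groupoid G} :
  (forall O, is_open T O -> exists W, prod_open T T W /\
     forall x y, src gr x = rng gr y -> (O (mul gr x y) <-> W (x, y))) ->
  (forall O, is_open T O -> is_open T (fun x => O (inv gr x))) ->
  forall O, is_open T O -> is_open T (fun x => O (rng gr x)).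
Proof.
  intros Hmul Hinv O HO. destruct (Hmul O HO) as [W [HW HOW]].
  apply open_local. intros x Ox.
  assert (Hc : forall y, src gr y = rng gr (inv gr y)) by (intro y; rewrite rng_inv; reflexivity).
  assert (Wx : W (x, inv gr x)).
  { apply (proj1 (HOW x (inv gr x) (Hc x))). rewrite mul_inv_r. exact Ox. }
  destruct (HW _ Wx) as [U [V [HU [HV [Ux [Vx HUV]]]]]]. simpl in Ux, Vx.
  exists (fun y => U y /\ V (inv gr y)). split; [apply open_inter; auto|split; [auto|]].
  intros y [Uy Vy]. rewrite <- (mul_inv_r gr y). apply (proj2 (HOW y (inv gr y) (Hc y))).
  apply HUV; auto.
Qed.

Lemma src_cont {G} {T : Topology G} {gr : Groupoid G} :
  (forall O, is_open T O -> exists W, prod_open T T W /\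
     forall x y, src gr x = rng gr y -> (O (mul gr x y) <-> W (x, y))) ->
  (forall O, is_open T O -> is_open T (fun x => O (inv gr x))) ->
  forall O, is_open T O -> is_open T (fun x => O (src gr x)).
Proof.
  intros Hmul Hinv O HO.
  apply open_ext with (A := fun x => O (rng gr (inv gr x))).
  - apply (Hinv (fun x => O (rng gr x))). apply (rng_cont Hmul Hinv); auto.
  - intro x. rewrite rng_inv. tauto.
Qed.

Lemma prodset_compact {G} {T : Topology G} {gr : Groupoid G} :
  (forall O, is_open T O -> exists W, prod_open T T W /\
     forall x y, src gr x = rng gr y -> (O (mul gr x y) <-> W (x, y))) ->
  (forall O, is_open T O -> is_open T (fun x => O (inv gr x))) ->
  hausdorff_on T (units gr) ->
  forall A B, compact T A -> compact T B -> compact T (set_prod gr A B).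
Proof.
  intros Hmul Hinv Hhaus A B HA HB I U HU Hc.
  pose proof (rng_cont Hmul Hinv) as Hr.
  pose proof (src_cont Hmul Hinv) as Hs.
  destruct (tube T A B (option I) (fun o x y => match o with
      | None => src gr x <> rng gr y
      | Some i => src gr x = rng gr y -> U i (mul gr x y) end) HA HB) as [l Hl].
  - intros a b Aa Bb. destruct (classic (src gr a = rng gr b)) as [E|NE].
    + destruct (Hc (mul gr a b)) as [i Ui].
      { exists a, b. repeat split; auto. }
      destruct (Hmul _ (HU i)) as [W [HW HOW]].
      assert (Wab : W (a, b)) by (apply (proj1 (HOW a b E)); exact Ui).
      destruct (HW _ Wab) as [U1 [V1 [HU1 [HV1 [Ua [Vb HUV]]]]]]. simpl in Ua, Vb.
      exists (Some i), U1, V1. repeat split; auto.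
      intros x y Ux Vy Exy. apply (proj2 (HOW x y Exy)). apply HUV; auto.
    + destruct (Hhaus (src gr a) (rng gr b)) as [O1 [O2 [HO1 [HO2 [O1a [O2b Hdis]]]]]].
      { unfold units; apply rng_src. }
      { unfold units; apply rng_rng. }
      { exact NE. }
      exists None, (fun x => O1 (src gr x)), (fun y => O2 (rng gr y)).
      repeat split; auto.
      intros x y Ox Oy Exy. apply (Hdis (src gr x)).
      * unfold units; apply rng_src.
      * exact Ox.
      * rewrite Exy; exact Oy.
  - exists (somes l). intros g [a [b [Aa [Bb [E ->]]]]].
    destruct (Hl a b Aa Bb) as [[i|] [Hin Q]].
    + exists i; split; [apply somes_in; auto| apply Q; auto].
    + contradiction.
Qed.

Lemma shrink {X} (T : Topology X) K O u P0 :
  compact T K -> hausdorff_on T K -> is_open T O -> is_open T P0 -> P0 u ->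
  (forall x, P0 x -> K x) -> O u ->
  exists K' P, compact T K' /\ (forall x, K' x -> O x) /\ is_open T P /\ P u /\
    forall x, P x -> K' x.
Proof.
  intros HK HH HO HP0 P0u P0K Ou.
  pose (N := fun x => P0 x /\ O x).
  assert (HN : is_open T N) by (apply open_inter; auto).
  pose (J := {p : (X -> Prop) * (X -> Prop) | is_open T (fst p) /\ is_open T (snd p) /\
            fst p u /\ forall z, K z -> fst p z -> snd p z -> False}).
  destruct (compact_diff HK HN J (fun p => snd (proj1_sig p))) as [L HL].
  - intros i; exact (proj1 (proj2 (proj2_sig i))).
  - intros x [Kx nNx].
    assert (Hne : u <> x) by (intros <-; apply nNx; split; auto).
    destruct (HH u x (P0K u P0u) Kx Hne) as [O1 [O2 [H1 [H2 [O1u [O2x Hd]]]]]].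
    exists (exist _ (O1, O2) (conj H1 (conj H2 (conj O1u Hd)))). exact O2x.
  - pose (Q := fun x => exists p, In p L /\ snd (proj1_sig p) x).
    assert (HQ : is_open T Q).
    { apply open_finite_union. intros i _; exact (proj1 (proj2 (proj2_sig i))). }
    exists (fun x => K x /\ ~ Q x), (fun x => N x /\ forall p, In p L -> fst (proj1_sig p) x).
    split; [apply compact_diff; auto|]. split.
    + intros x [Kx nQ]. destruct (classic (N x)) as [Nx|nNx].
      * exact (proj2 Nx).
      * exfalso; apply nQ. destruct (HL x (conj Kx nNx)) as [p [Hp H2]]. exists p; auto.
    + split.
      { apply open_inter; [exact HN| apply open_finite_inter; intros i _; exact (proj1 (proj2_sig i))]. }
      split.
      * split; [split; auto|]. intros i _; exact (proj1 (proj2 (proj2 (proj2_sig i)))).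
      * intros x [[P0x Ox] HP]. split; [apply P0K; auto|].
        intros [p [Hp H2]]. pose proof (HP p Hp) as H1.
        exact (proj2 (proj2 (proj2 (proj2_sig p))) x (P0K x P0x) H1 H2).
Qed.

Theorem mainTheorem4 (G : Type) (T : Topology G) (gr : Groupoid G) :
  lhlc_groupoid T gr ->
  paracompact_on T (units gr) ->
  forall V : G -> Prop, nbhd_of_set T (units gr) V ->
  exists U : G -> Prop,
    nbhd_of_set T (units gr) U /\ diagonally_compact T gr U /\
    (forall g, U g -> V g).
Proof.
  intros [Hmul [Hinv [Hhaus [Hloc Hropen]]]] Hpara V [OV [HOV [OVu OVV]]].
  pose proof (rng_cont Hmul Hinv) as Hr.
  pose proof (src_cont Hmul Hinv) as Hs.
  pose (I := {u : G | units gr u}).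
  assert (HK : forall u : I, exists p : (G -> Prop) * (G -> Prop),
     compact T (fst p) /\ (forall x, fst p x -> OV x) /\ is_open T (snd p) /\
     snd p (proj1_sig u) /\ forall x, snd p x -> fst p x).
  { intros [u Hu]. destruct (Hloc u) as [K [[P0 [HP0 [P0u P0K]]] [HKc HKh]]].
    destruct (shrink T K OV u P0 HKc HKh HOV HP0 P0u P0K (OVu u Hu))
      as [K' [P [H1 [H2 [H3 [H4 H5]]]]]].
    exists (K', P); simpl; repeat split; auto. }
  destruct (choice' HK) as [kp Hkp].
  pose (Kc := fun u => fst (kp u)). pose (Pc := fun u => snd (kp u)).
  assert (KcC : forall u, compact T (Kc u)) by (intro u; exact (proj1 (Hkp u))).
  assert (KcV : forall u x, Kc u x -> OV x) by (intro u; exact (proj1 (proj2 (Hkp u)))).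
  assert (PcO : forall u, is_open T (Pc u)) by (intro u; exact (proj1 (proj2 (proj2 (Hkp u))))).
  assert (Pcu : forall u, Pc u (proj1_sig u)) by (intro u; exact (proj1 (proj2 (proj2 (proj2 (Hkp u)))))).
  assert (PcK : forall u x, Pc u x -> Kc u x) by (intro u; exact (proj2 (proj2 (proj2 (proj2 (Hkp u)))))).
  clearbody Kc Pc. clear Hkp HK.
  destruct (Hpara I Pc) as [J [Vf [HVrel [HVcov [HVref HVlf]]]]].
  - intros u. exists (Pc u). split; [apply PcO| intros; tauto].
  - intros x Hx. exists (exist _ x Hx). apply (Pcu (exist _ x Hx)).
  - destruct (choice' HVref) as [idx Hidx].
    assert (HLF : forall u : I, exists p : (G -> Prop) * list J, is_open T (fst p) /\
          fst p (proj1_sig u) /\ forall j y, units gr y -> fst p y -> Vf j y -> In j (snd p)).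
    { intros [u Hu]. destruct (HVlf u Hu) as [W [[O [HO HWO]] [Wu [l Hl]]]].
      exists (O, l); simpl; repeat split; auto.
      - apply HWO; auto.
      - intros j y Hy Oy Vy. apply Hl. exists y; repeat split; auto. apply HWO; auto. }
    destruct (choice' HLF) as [lf Hlf].
    pose (F := fun j y => units gr y /\ forall O, is_open T O -> O y ->
                 exists z, units gr z /\ Vf j z /\ O z).
    pose (E := fun j y => exists O, is_open T O /\ O y /\
                 ~ exists z, units gr z /\ Vf j z /\ O z).
    assert (HE : forall j, is_open T (E j)).
    { intro j. apply open_local. intros y [O [HO [Oy Hn]]].
      exists O; repeat split; auto. intros y' Oy'. exists O; auto. }
    assert (HFE : forall j y, units gr y -> (F j y <-> ~ E j y)).
    { intros j y Hy; split.
      - intros [_ HF] [O [HO [Oy Hn]]]. apply Hn, HF; auto.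
      - intros Hn; split; auto. intros O HO Oy. apply NNPP. intro Hc. apply Hn.
        exists O; auto. }
    pose (C := fun j b => Kc (idx j) b /\ F j (rng gr b) /\ F j (src gr b)).
    assert (HC : forall j, compact T (C j)).
    { intro j. apply compact_ext with (A := fun b => Kc (idx j) b /\ ~ (E j (rng gr b) \/ E j (src gr b))).
      - apply compact_diff. apply KcC. apply open_or; [apply Hr| apply Hs]; apply HE.
      - intros b. unfold C.
        pose proof (HFE j (rng gr b) (rng_rng gr b)) as H1.
        pose proof (HFE j (src gr b) (rng_src gr b)) as H2. tauto. }
    assert (Hfin : forall (f : G -> G) W,
               (forall O, is_open T O -> is_open T (fun x => O (f x))) ->
               (forall a, units gr (f a)) -> compact T W ->
               exists L, forall j a, W a -> F j (f a) -> In j L).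
    { intros f W Hf Hfu HW.
      destruct (HW I (fun u => fun a => fst (lf u) (f a))) as [l Hl].
      - intros u. apply Hf. apply Hlf.
      - intros a Wa. exists (exist _ (f a) (Hfu a)). apply (Hlf (exist _ (f a) (Hfu a))).
      - exists (flat_map (fun u => snd (lf u)) l). intros j a Wa [Hu HF].
        destruct (Hl a Wa) as [u [Hin Ou]]. apply in_flat_map. exists u; split; auto.
        destruct (HF _ (proj1 (Hlf u)) Ou) as [z [Hz [Vz Oz]]].
        apply (proj2 (proj2 (Hlf u)) j z Hz Oz Vz). }
    exists (fun g => exists j, C j g).
    split; [|split].
    + exists (fun g => exists j O, is_open T O /\ (forall x, units gr x -> (Vf j x <-> O x)) /\
                Pc (idx j) g /\ O (rng gr g) /\ O (src gr g)).
      split; [|split].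
      * apply open_local. intros g [j [O [HO [HVO [Pg [Or Os]]]]]].
        exists (fun g' => Pc (idx j) g' /\ O (rng gr g') /\ O (src gr g')). split.
        { apply open_inter; [apply PcO| apply open_inter; [apply Hr| apply Hs]; auto]. }
        split; [auto|]. intros g' H'. exists j, O; auto.
      * intros x Hx. destruct (HVcov x Hx) as [j Vj]. destruct (HVrel j) as [O [HO HVO]].
        assert (Hsx : src gr x = x).
        { unfold units in Hx. rewrite <- Hx at 1. rewrite src_rng. exact Hx. }
        unfold units in Hx.
        exists j, O. split; [exact HO|]. split; [exact HVO|]. split; [exact (Hidx j x Hx Vj)|].
        split; [rewrite Hx | rewrite Hsx]; apply HVO; auto.
      * intros g [j [O [HO [HVO [Pg [Or Os]]]]]]. exists j. split; [apply PcK; exact Pg|]. split.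
        { split. apply rng_rng. intros O' HO' O'r. exists (rng gr g).
          split; [apply rng_rng|]. split; [|exact O'r]. apply HVO; auto. apply rng_rng. }
        { split. apply rng_src. intros O' HO' O'r. exists (src gr g).
          split; [apply rng_src|]. split; [|exact O'r]. apply HVO; auto. apply rng_src. }
    + intros W HW. split.
      * destruct (Hfin (rng gr) W Hr (rng_rng gr) HW) as [L HL].
        apply compact_ext with (A := fun g => exists j, In j L /\ set_prod gr (C j) W g).
        { apply compact_list_union. intro j. apply (prodset_compact Hmul Hinv Hhaus); auto. }
        intros g. split.
        { intros [j [_ [a [b [Ca [Wb [E0 ->]]]]]]]. exists a, b. repeat split; auto. exists j; auto. }
        { intros [a [b [[j Ca] [Wb [E0 ->]]]]]. exists j. split.
          - apply (HL j b Wb). rewrite <- E0. exact (proj2 (proj2 Ca)).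
          - exists a, b; auto. }
      * destruct (Hfin (src gr) W Hs (rng_src gr) HW) as [L HL].
        apply compact_ext with (A := fun g => exists j, In j L /\ set_prod gr W (C j) g).
        { apply compact_list_union. intro j. apply (prodset_compact Hmul Hinv Hhaus); auto. }
        intros g. split.
        { intros [j [_ [a [b [Wa [Cb [E0 ->]]]]]]]. exists a, b. repeat split; auto. exists j; auto. }
        { intros [a [b [Wa [[j Cb] [E0 ->]]]]]. exists j. split.
          - apply (HL j a Wa). rewrite E0. exact (proj1 (proj2 Cb)).
          - exists a, b; auto. }
    + intros g [j Cj]. apply OVV. apply (KcV (idx j)). exact (proj1 Cj).
Qed.
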